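(* Let $u$ be a drift function. The following are equivalent: (i) $\mathcal F^1_u$ and $\mathcal E^1_u$ coincide as sets with equivalent norms; (ii) there are $a\in[0,1)$ and $b\in\mathbb R$ with $Pu\le au+b$ on $\mathbf X$; (iii) $u\in\mathcal E^1_u$.
   Context: $(X_n)$ Markov chain on a complete separable metric space $\mathbf X$, $\mathbb P_x$ its law from $x$, $Pf(x)=\mathbb E_xf(X_1)$; $\tau$ a $\theta$-compatible stopping time ($\mathbb P_x(\tau=0)=0$ and $\mathbb P_x$-a.s. $\tau\ge2\Rightarrow\tau\circ\theta=\tau-1$, $\theta$ the shift) with $\mathbb E_x\tau<\infty$ for all $x$. $Qf(x)=\mathbb E_x[f(X_\tau)\mathbf 1_{\tau<\infty}]$. A drift function is a Borel $u:\mathbf X\to[1,\infty)$ such that $u-Pu$ is bounded below and $Qu$, $x\mapsto\mathbb E_x\tau/u(x)$ and $P(u-Pu+B_u)/(u-Pu+B_u)$ are bounded on $\mathbf X$, where $B_u=\sup_{\mathbf X}(Pu-u)+1$. For Borel $v:\mathbf X\to[1,\infty)$ and $p\ge1$, $\mathcal F^p_v$ is the Banach space of Borel $f$ with $\sup|f|^p/v<\infty$, with norm $\sup_x|f(x)|/v(x)^{1/p}$; $\mathcal E^p_u:=\mathcal F^p_{u-Pu+B_u}$. *)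

(* Defs.v *)
From HB Require Import structures.
From mathcomp Require Import all_boot all_order all_algebra.
From mathcomp Require Import all_classical all_reals all_analysis.
Set Implicit Arguments. Unset Strict Implicit. Unset Printing Implicit Defensive.
Import Order.TTheory GRing.Theory Num.Theory.
Import numFieldNormedType.Exports.
Local Open Scope classical_set_scope.
Local Open Scope ring_scope.
Local Open Scope ereal_scope.

Notation borel X := (g_sigma_algebraType (@open X)).

Section Defs.
Context {R : realType} {dX : measure_display} {X : measurableType dX}.

(** [Pf(x) = E_x f(X_1) = \int k(x,dy) f(y)] (extended-real valued). *)
Definition Pop (k : R.-pker X ~> X) (f : X -> R) (x : X) : \bar R :=
  \int[k x]_y (f y)%:E.

(** [P_x(X_0 \in A_0, ..., X_n \in A_n)] computed from the kernel:
    [1_{A_0}(x) \int k(x,dy_1) 1_{A_1}(y_1) \int ... ]. *)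
Fixpoint fdd (k : R.-pker X ~> X) (As : seq (set X)) (x : X) : \bar R :=
  match As with
  | [::] => 1
  | A :: As' => (\1_A x)%:E * \int[k x]_y fdd k As' y
  end.

Context {dO : measure_display} {Omega : measurableType dO}.

Definition markov_chain (k : R.-pker X ~> X) (Xn : nat -> Omega -> X)
    (theta : Omega -> Omega) (Px : X -> probability Omega R) : Prop :=
  (forall n, measurable_fun setT (Xn n)) /\
  measurable_fun setT theta /\
  (forall n w, Xn n (theta w) = Xn n.+1 w) /\
  (forall x (As : seq (set X)), (forall i, measurable (nth setT As i)) ->
     Px x [set w | forall i, (i < size As)%N -> nth setT As i (Xn i w)]
     = fdd k As x).

(** natural filtration: sigma(X_0, ..., X_n) is generated by these sets *)
Definition natfilt (Xn : nat -> Omega -> X) (n : nat) : set (set Omega) :=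
  [set B | exists i A, (i <= n)%N /\ measurable A /\ B = Xn i @^-1` A].

(** stopping times take values in [nat \cup {oo}]; [None] stands for [oo] *)
Definition stopping_time (Xn : nat -> Omega -> X) (tau : Omega -> option nat)
  : Prop := forall n, <<s natfilt Xn n >> [set w | tau w = Some n].

Definition theta_compatible (Px : X -> probability Omega R)
    (theta : Omega -> Omega) (tau : Omega -> option nat) : Prop :=
  forall x, Px x [set w | tau w = Some 0%N] = 0 /\
  {ae Px x, forall w, match tau w with
                      | Some n => (2 <= n)%N -> tau (theta w) = Some n.-1
                      | None => tau (theta w) = None
                      end}.

Definition tauE (tau : Omega -> option nat) (w : Omega) : \bar R :=
  match tau w with Some n => (n%:R)%:E | None => +oo end.

Definition Etau (Px : X -> probability Omega R) (tau : Omega -> option nat)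
  (x : X) : \bar R := \int[Px x]_w tauE tau w.

Definition Qop (Px : X -> probability Omega R) (Xn : nat -> Omega -> X)
    (tau : Omega -> option nat) (f : X -> R) (x : X) : \bar R :=
  \int[Px x]_w (match tau w with Some n => f (Xn n w) | None => 0%R end)%:E.

Definition Bu (k : R.-pker X ~> X) (u : X -> R) : R :=
  (sup (range (fun x => fine (Pop k u x) - u x)) + 1)%R.

Definition Ew (k : R.-pker X ~> X) (u : X -> R) (x : X) : R :=
  (u x - fine (Pop k u x) + Bu k u)%R.

Definition drift_function (k : R.-pker X ~> X) (Px : X -> probability Omega R)
    (Xn : nat -> Omega -> X) (tau : Omega -> option nat) (u : X -> R) : Prop :=
  measurable_fun setT u /\
  (forall x, 1 <= u x)%R /\
  (exists c : R, forall x, c%:E <= (u x)%:E - Pop k u x) /\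
  (exists M : R, forall x, `|Qop Px Xn tau u x| <= M%:E) /\
  (exists M : R, forall x, `|Etau Px tau x| <= (M * u x)%:E) /\
  (exists M : R, forall x, `|Pop k (Ew k u) x| <= (M * Ew k u x)%:E).

Definition Fsp (p : R) (v : X -> R) (f : X -> R) : Prop :=
  measurable_fun setT f /\ exists C : R, forall x, (`|f x| `^ p <= C * v x)%R.

Definition normF (p : R) (v : X -> R) (f : X -> R) : R :=
  sup (range (fun x => `|f x| / v x `^ p^-1))%R.

End Defs.

(* Main.v *)
Require Import Defs.
From HB Require Import structures.
From mathcomp Require Import all_boot all_order all_algebra.
From mathcomp Require Import all_classical all_reals all_analysis.
From mathcomp Require Import lra.
Import Order.TTheory GRing.Theory Num.Theory.
Import numFieldNormedType.Exports.
Local Open Scope classical_set_scope.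
Local Open Scope ring_scope.

Lemma sup_range_le (R : realType) (T : Type) (a b : T -> R) (D : R) :
  0 <= D -> has_ubound (range b) -> (forall x, a x <= D * b x) ->
  sup (range a) <= D * sup (range b).
Proof.
move=> D0 hb H.
case: (pselect (exists x : T, True)) => [[x0 _]|nT].
- apply: ge_sup; first by exists (a x0), x0.
  move=> _ [x _ <-]; apply: le_trans (H x) _; apply: ler_wpM2l => //.
  by apply: ub_le_sup => //; exists x.
- have E : forall f : T -> R, range f = set0.
    move=> f; apply/seteqP; split=> // y [x _ _]; case: nT; by exists x.
  by rewrite !E sup0 mulr0.
Qed.

Lemma pointw (R : realType) (a v1 v2 D : R) : 0 < v1 -> 0 < v2 -> 0 <= a ->
  v2 <= D * v1 -> a / v1 <= D * (a / v2).
Proof.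
move=> h1 h2 ha hD; rewrite ler_pdivrMr //.
have ht : 0 <= a / v2 by apply: divr_ge0 => //; exact: ltW.
have ea : a = (a / v2) * v2 by rewrite divfK // gt_eqF.
set t := a / v2 in ht ea *; rewrite [X in X <= _]ea.
have : 0 <= t * (D * v1 - v2) by apply: mulr_ge0 => //; rewrite subr_ge0.
nra.
Qed.

Lemma Fsp1E (R : realType) (d : measure_display) (T : measurableType d) (v f : T -> R) :
  Fsp 1 v f <-> measurable_fun setT f /\ exists C : R, forall x, `|f x| <= C * v x.
Proof.
rewrite /Fsp; split=> -[mf [C hC]]; split=> //; exists C => x.
- by rewrite -(powRr1 (normr_ge0 (f x))).
- by rewrite (powRr1 (normr_ge0 (f x))).
Qed.

Lemma normF1E (R : realType) (d : measure_display) (T : measurableType d) (v f : T -> R) :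
  (forall x, 1 <= v x) -> normF 1 v f = sup (range (fun x => `|f x| / v x)).
Proof.
move=> hv; rewrite /normF invr1.
have -> : (fun x => `|f x| / v x `^ 1) = (fun x => `|f x| / v x) => //.
apply: boolp.funext => x /=.
by rewrite powRr1 // (le_trans _ (hv x)).
Qed.

Theorem mainTheorem11 (R : realType) (X : completePseudoMetricType R)
  (hX : hausdorff_space X)
  (sepX : exists D : set X, countable D /\ dense D)
  (dO : measure_display) (Omega : measurableType dO)
  (k : R.-pker borel X ~> borel X)
  (Xn : nat -> Omega -> borel X) (theta : Omega -> Omega)
  (Px : borel X -> probability Omega R)
  (hM : markov_chain k Xn theta Px)
  (tau : Omega -> option nat)
  (htau : stopping_time Xn tau)
  (htheta : theta_compatible Px theta tau)
  (hEtau : forall x, (Etau Px tau x < +oo)%E)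
  (u : borel X -> R)
  (hu : drift_function k Px Xn tau u) :
  [<->
    (* (i) F^1_u = E^1_u as sets, with equivalent norms *)
    (forall f : borel X -> R, Fsp 1 u f <-> Fsp 1 (Ew k u) f) /\
    (exists c C : R, 0 < c /\ 0 < C /\
       forall f : borel X -> R, Fsp 1 u f ->
         c * normF 1 u f <= normF 1 (Ew k u) f /\
         normF 1 (Ew k u) f <= C * normF 1 u f);
    (* (ii) Pu <= a u + b with a in [0,1) *)
    exists a b : R, 0 <= a < 1 /\ forall x, (Pop k u x <= (a * u x + b)%:E)%E;
    (* (iii) u in E^1_u *)
    Fsp 1 (Ew k u) u].
Proof.
case: hu => mu [u1 [[c hc] _]].
have Pge0 : forall x, (0 <= Pop k u x)%E.
  move=> x; apply: integral_ge0 => y _; rewrite lee_fin.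
  exact: le_trans (u1 y).
have Pfin : forall x, Pop k u x = (fine (Pop k u x))%:E.
  move=> x; have := hc x; have := Pge0 x.
  by case: (Pop k u x).
set p := fun x => fine (Pop k u x).
have pge0 : forall x, 0 <= p x.
  by move=> x; have := Pge0 x; rewrite Pfin lee_fin.
have pc : forall x, c <= u x - p x.
  by move=> x; have := hc x; rewrite Pfin -EFinB lee_fin.
have hS : has_ubound (range (fun x => p x - u x)).
  by exists (- c) => _ [x _ <-]; have := pc x; lra.
have hB1 : forall x, p x - u x + 1 <= Bu k u.
  move=> x; rewrite /Bu lerD2r; apply: ub_le_sup => //; by exists x.
set B := Bu k u in hB1.
have wE : forall x, Ew k u x = u x - p x + B by [].
have w1 : forall x, 1 <= Ew k u x by move=> x; rewrite wE; have := hB1 x; lra.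
have wle : forall x, Ew k u x <= (1 + `|B|) * u x.
  move=> x; rewrite wE; have := pge0 x; have := u1 x; have := ler_norm B.
  have : 0 <= `|B| * (u x - 1) by apply: mulr_ge0 => //; have := u1 x; lra.
  nra.
have u0 : forall x, 0 < u x by move=> x; exact: lt_le_trans (u1 x).
have w0 : forall x, 0 < Ew k u x by move=> x; exact: lt_le_trans (w1 x).
have iii_ii : Fsp 1 (Ew k u) u ->
   exists a b : R, 0 <= a < 1 /\ forall x, (Pop k u x <= (a * u x + b)%:E)%E.
  move=> /Fsp1E [_ [C hC]].
  set C' := `|C| + 1.
  have C'1 : 1 <= C' by rewrite /C' lerDr.
  have C'0 : 0 < C' by exact: lt_le_trans C'1.
  have huw : forall x, u x <= C' * Ew k u x.
    move=> x; apply: le_trans (ler_norm (u x)) _; apply: le_trans (hC x) _.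
    rewrite ler_pM2r //; rewrite /C'; have := ler_norm C; lra.
  exists (1 - C'^-1), B; split.
    apply/andP; split; first by rewrite subr_ge0 invf_le1.
    by rewrite ltrBlDr ltrDl invr_gt0.
  move=> x; rewrite Pfin lee_fin -/(p x).
  have : u x / C' <= Ew k u x by rewrite ler_pdivrMr // mulrC.
  rewrite wE mulrBl mul1r (mulrC _ (u x)); lra.
have ii_iii : (exists a b : R, 0 <= a < 1 /\ forall x, (Pop k u x <= (a * u x + b)%:E)%E)
   -> Fsp 1 (Ew k u) u.
  move=> [a [b [/andP[a0 a1] hab]]]; apply/Fsp1E; split => //.
  have a1' : 0 < 1 - a by rewrite subr_gt0.
  exists ((1 + `|b - B|) / (1 - a)) => x.
  rewrite ger0_norm; last exact: ltW.
  rewrite -(ler_pM2l a1') mulrA mulrCA divff ?gt_eqF // mulr1.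
  have hp : p x <= a * u x + b by have := hab x; rewrite Pfin lee_fin.
  have := ler_norm (b - B).
  have : `|b - B| <= `|b - B| * Ew k u x by rewrite ler_peMr.
  have := w1 x; rewrite wE; nra.
have iii_i : Fsp 1 (Ew k u) u ->
    (forall f : borel X -> R, Fsp 1 u f <-> Fsp 1 (Ew k u) f) /\
    (exists c C : R, 0 < c /\ 0 < C /\
       forall f : borel X -> R, Fsp 1 u f ->
         c * normF 1 u f <= normF 1 (Ew k u) f /\
         normF 1 (Ew k u) f <= C * normF 1 u f).
  move=> /Fsp1E [_ [C hC]].
  set C' := `|C| + 1.
  have C'1 : 1 <= C' by rewrite /C' lerDr.
  have C'0 : 0 < C' by exact: lt_le_trans C'1.
  have huw : forall x, u x <= C' * Ew k u x.
    move=> x; apply: le_trans (ler_norm (u x)) _; apply: le_trans (hC x) _.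
    rewrite ler_pM2r //; rewrite /C'; have := ler_norm C; lra.
  set D := 1 + `|B|.
  have D0 : 0 < D by rewrite /D ltr_pwDl.
  split.
    move=> f; rewrite !Fsp1E; split => -[mf [C1 h1]]; split => //.
    - exists (`|C1| * C') => x; apply: le_trans (h1 x) _.
      apply: le_trans (_ : `|C1| * u x <= _).
        by rewrite ler_pM2r // ler_norm.
      by rewrite -mulrA ler_wpM2l.
    - exists (`|C1| * D) => x; apply: le_trans (h1 x) _.
      apply: le_trans (_ : `|C1| * Ew k u x <= _).
        by rewrite ler_pM2r // ler_norm.
      by rewrite -mulrA ler_wpM2l.
  exists D^-1, C'; split; first by rewrite invr_gt0.
  split => // f /Fsp1E [mf [C1 h1]].
  rewrite !normF1E //.
  have bu : has_ubound (range (fun x => `|f x| / u x)).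
    by exists C1 => _ [x _ <-]; rewrite ler_pdivrMr.
  have bw : has_ubound (range (fun x => `|f x| / Ew k u x)).
    exists (`|C1| * C') => _ [x _ <-]; rewrite ler_pdivrMr //.
    apply: le_trans (h1 x) _.
    apply: le_trans (_ : `|C1| * u x <= _).
      by rewrite ler_pM2r // ler_norm.
    by rewrite -mulrA ler_wpM2l.
  split.
  - have H : sup (range (fun x => `|f x| / u x)) <=
             D * sup (range (fun x => `|f x| / Ew k u x)).
      apply: sup_range_le => //; first exact: ltW.
      by move=> x; apply: pointw.
    rewrite -(ler_pM2l D0) mulrA divff ?gt_eqF // mul1r.
    exact: H.
  - apply: sup_range_le => //; first exact: ltW.
    by move=> x; apply: pointw.
tfae.
- move=> [h _]; apply: iii_ii; apply/h; apply/Fsp1E; split => //.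
  by exists 1 => x; rewrite mul1r ger0_norm // ltW.
- exact: ii_iii.
- exact: iii_i.
Qed.
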